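(* Let $\Gamma$ be a metric graph and let $D$ be a vertex-supported effective divisor on $\Gamma$ with $d=\deg(D)$. Then the dimension of the cell complex $|D|$ is at most $d$. In addition, if $\Gamma$ is $2$-connected, then the dimension of the cell complex $|D|$ is at most $d-1$.
   Context: A metric graph $\Gamma=(V,E)$ is a connected undirected graph (loops and parallel edges allowed) whose edges have positive real lengths $M_e$; each edge is viewed as a real segment. A divisor is a finite formal $\mathbb{Z}$-combination $D=\sum_{x\in\Gamma}D(x)\cdot x$ of points of $\Gamma$; it is effective if all $D(x)\ge 0$, its degree is $\sum_x D(x)$, its support is $\{x: D(x)\neq 0\}$, and it is vertex-supported if its support is contained in $V$. A rational function is a continuous $f:\Gamma\to\mathbb{R}$, piecewise linear on each edge with finitely many pieces and integer slopes; $\mathrm{ord}_x(f)$ is the sum of the outgoing slopes of $f$ at $x$ over all directions at $x$, and $(f)=\sum_x \mathrm{ord}_x(f)\cdot x$. $R(D)$ is the set of rational functions $f$ with $D+(f)$ effective, and the linear system is $|D|=\{D+(f): f\in R(D)\}$. Cell structure of $|D|$: identify each open edge $e$ with $(0,M_e)$ (fixing an orientation). A cell is specified by data: a nonnegative integer $d_v$ for each $v\in V$; for some edges $e$ an ordered partition $d_e=\sum_{i=1}^{r_e}d_e^i$ into positive integers; and an integer $m_e$ for each $e\in E$. A divisor $L\in|D|$ lies in this cell iff $L(v)=d_v$ for all $v\in V$; on each edge $e$ with a partition, $L$ restricted to the interior of $e$ equals $\sum_{i=1}^{r_e}d_e^i x_i$ with $0<x_1<\dots<x_{r_e}<M_e$,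 while on other edges $L$ vanishes at all interior points; and for any $f\in R(D)$ with $L=D+(f)$, the outgoing slope of $f$ at the point $0$ of $e$ is $m_e$ for each $e$. Any $L$ in a cell is called a representative of it. For a cell $C$ with representative $L$, setting $I_L=\{x\in\Gamma\setminus V: L(x)>0\}$, the dimension of $C$ equals one less than the number of connected components of $\Gamma\setminus I_L$ (a known fact from Haase–Musiker–Yu). The dimension of $|D|$ is the maximum dimension of its cells. *)

(* Defs.v *)
From Stdlib Require Import Reals ZArith List ClassicalEpsilon Relation_Operators.
From mathcomp Require Import all_boot.
Set Implicit Arguments. Unset Strict Implicit.
Local Open Scope R_scope.

(** The open edge e is identified with (0, mlen e). *)
Record mgraph := MGraph {
  mV : finType;
  mE : finType;
  msrc : mE -> mV;
  mtgt : mE -> mV;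
  mlen : mE -> R;
  mlen_pos : forall e, (0 < mlen e) }.

(** Points of Gamma: a vertex, or a parameter t on an edge e
    (a genuine point only when 0 < t < mlen e, see [valid]). *)
Inductive point (G : mgraph) : Type :=
| PV : mV G -> point G
| PE : mE G -> R -> point G.
Arguments PV {G}.
Arguments PE {G}.

Definition valid (G : mgraph) (x : point G) : Prop :=
  match x with PV _ => True | PE e t => (0 < t < mlen e) end.

Definition edgefun (G : mgraph) (f : point G -> R) (e : mE G) (t : R) : R :=
  if Rle_dec t 0 then f (PV (msrc e))
  else if Rle_dec (mlen e) t then f (PV (mtgt e)) else f (PE e t).

Definition pl_int (g : R -> R) (a b : R) : Prop :=
  exists (n : nat) (ts : nat -> R) (ss : nat -> Z),
    ts 0%nat = a /\ ts n = b /\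
    (forall i : nat, (i < n)%nat -> (ts i < ts i.+1)) /\
    (forall (i : nat) (t : R), (i < n)%nat -> (ts i <= t <= ts i.+1) ->
        g t = (g (ts i) + IZR (ss i) * (t - ts i))).

(** Rational functions on Gamma (continuity is built in: on each closed edge
    the function is piecewise linear and agrees with the vertex values). *)
Definition rational (G : mgraph) (f : point G -> R) : Prop :=
  forall e : mE G, pl_int (edgefun f e) 0 (mlen e).

Definition rslope (g : R -> R) (t : R) : Z :=
  epsilon (inhabits 0%Z) (fun s => exists eps : R, (0 < eps) /\
     forall h : R, (0 < h < eps) -> g (t + h) = (g t + IZR s * h)).
Definition lslope (g : R -> R) (t : R) : Z :=
  epsilon (inhabits 0%Z) (fun s => exists eps : R, (0 < eps) /\
     forall h : R, (0 < h < eps) -> g (t - h) = (g t + IZR s * h)).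

Definition ord (G : mgraph) (f : point G -> R) (x : point G) : Z :=
  match x with
  | PE e t => (rslope (edgefun f e) t + lslope (edgefun f e) t)%Z
  | PV v => (\big[Z.add/0%Z]_(e : mE G | msrc e == v) rslope (edgefun f e) 0
           + \big[Z.add/0%Z]_(e : mE G | mtgt e == v) lslope (edgefun f e) (mlen e))%Z
  end.

(** Divisors are functions point -> Z (only values at valid points matter). *)
Definition effective (G : mgraph) (D : point G -> Z) : Prop :=
  forall x, valid x -> (0 <= D x)%Z.

Definition vertex_supported (G : mgraph) (D : point G -> Z) : Prop :=
  forall x, valid x -> D x <> 0%Z -> exists v, x = PV v.

Definition is_degree (G : mgraph) (D : point G -> Z) (d : Z) : Prop :=
  exists l : list (point G),
    List.NoDup l /\ (forall x, List.In x l -> valid x) /\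
    (forall x, valid x -> D x <> 0%Z -> List.In x l) /\
    d = List.fold_right (fun x acc => (D x + acc)%Z) 0%Z l.

Definition in_linsys (G : mgraph) (D L : point G -> Z) : Prop :=
  exists f : point G -> R, rational f /\
    (forall x, valid x -> L x = (D x + ord f x)%Z) /\ effective L.

Definition IL (G : mgraph) (L : point G -> Z) (x : point G) : Prop :=
  valid x /\ (exists e t, x = PE e t) /\ (0 < L x)%Z.

Definition avoids (G : mgraph) (S : point G -> Prop) (x : point G) : Prop :=
  valid x /\ ~ S x.

Definition step (G : mgraph) (S : point G -> Prop) (x y : point G) : Prop :=
  avoids S x /\ avoids S y /\
  exists (e : mE G) (t : R), x = PE e t /\
   ( (exists t', y = PE e t' /\
        forall s, (Rmin t t' <= s <= Rmax t t') -> ~ S (PE e s))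
   \/ (y = PV (msrc e) /\ forall s, (0 < s <= t) -> ~ S (PE e s))
   \/ (y = PV (mtgt e) /\ forall s, (t <= s < mlen e) -> ~ S (PE e s))).

Definition conn (G : mgraph) (S : point G -> Prop) : point G -> point G -> Prop :=
  clos_refl_sym_trans _ (step S).

Definition has_ncomponents (G : mgraph) (S : point G -> Prop) (k : nat) : Prop :=
  exists reps : list (point G),
    List.length reps = k /\ List.NoDup reps /\
    (forall r, List.In r reps -> avoids S r) /\
    (forall r1 r2, List.In r1 reps -> List.In r2 reps -> conn S r1 r2 -> r1 = r2) /\
    (forall x, avoids S x -> exists r, List.In r reps /\ conn S x r).

(** dim |D| <= m : every L in |D| lies in a cell of dimension
    (#components of Gamma \ I_L) - 1 <= m (Haase--Musiker--Yu). *)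
Definition linsys_dim_le (G : mgraph) (D : point G -> Z) (m : Z) : Prop :=
  forall L, in_linsys D L ->
    exists k : nat, has_ncomponents (IL L) k /\ (Z.of_nat k - 1 <= m)%Z.

Definition gconnected (G : mgraph) : Prop :=
  forall x y : point G, valid x -> valid y -> conn (fun _ => False) x y.

Definition two_connected (G : mgraph) : Prop :=
  gconnected G /\
  forall z : point G, valid z ->
    forall x y, avoids (fun p => p = z) x -> avoids (fun p => p = z) y ->
      conn (fun p => p = z) x y.

(* Main.v *)
Require Import Defs.
From Stdlib Require Import Reals ZArith Lra Lia List ClassicalEpsilon Classical Relation_Operators Permutation FunctionalExtensionality PropExtensionality.
From mathcomp Require Import ssreflect ssrbool eqtype ssrnat fintype bigop.
From mathcomp Require seq.
Import (canonicals) seq.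
Import Stdlib.Lists.List.
From mathcomp Require Import zify.
From Stdlib Require Import Reals ZArith.
From HB Require Import structures.
Set Implicit Arguments. Unset Strict Implicit.
Local Open Scope list_scope.
Local Open Scope R_scope.
Lemma conn_refl' (G : mgraph) (S : point G -> Prop) x : conn S x x.
Proof. apply rst_refl. Qed.
Lemma conn_sym' (G : mgraph) (S : point G -> Prop) x y : conn S x y -> conn S y x.
Proof. apply rst_sym. Qed.
Lemma conn_trans' (G : mgraph) (S : point G -> Prop) x y z : conn S x y -> conn S y z -> conn S x z.
Proof. apply rst_trans. Qed.

Definition Cov (G : mgraph) (S : point G -> Prop) (R0 : list (point G)) :=
  (forall r, In r R0 -> avoids S r) /\
  (forall x, avoids S x -> exists r, In r R0 /\ conn S x r).

Lemma reps_of (G : mgraph) (S : point G -> Prop) (R0 : list (point G)) :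
  (forall r, In r R0 -> avoids S r) ->
  exists reps, (length reps <= length R0)%coq_nat /\ NoDup reps /\
   (forall r, In r reps -> avoids S r) /\
   (forall r1 r2, In r1 reps -> In r2 reps -> conn S r1 r2 -> r1 = r2) /\
   (forall x, (exists r, In r R0 /\ conn S x r) -> exists r, In r reps /\ conn S x r).
Proof.
  induction R0 as [|r R0 IH]; intros HR.
  - exists nil. split; [simpl; lia|]. split; [constructor|].
    split; [intros ? []|]. split; [intros ? ? []|].
    intros x [r0 [[] _]].
  - destruct IH as [reps [H1 [H2 [H3 [H4 H5]]]]].
    { intros r' Hr'. apply HR. simpl. auto. }
    destruct (classic (exists r', In r' reps /\ conn S r r')) as [[r' [Hr'1 Hr'2]]|Hno].
    + exists reps. refine (conj _ (conj _ (conj _ (conj _ _)))); auto.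
      * simpl. lia.
      * intros x [r0 [[Hr0|Hin] Hc]].
        -- subst r0. exists r'. split; auto. eapply conn_trans'; eauto.
        -- apply H5. eauto.
    + exists (r :: reps). refine (conj _ (conj _ (conj _ (conj _ _)))).
      * simpl. lia.
      * constructor; auto. intro Hin. apply Hno. exists r. split; auto. apply conn_refl'.
      * intros r0 [Hr0|Hin]; [subst r0|auto]; auto. apply HR. simpl; auto.
      * intros r1 r2 [Hr1|Hin1] [Hr2|Hin2] Hc; subst; auto.
        -- exfalso. apply Hno. exists r2. split; auto.
        -- exfalso. apply Hno. exists r1. split; auto. apply conn_sym'; auto.
      * intros x [r0 [[Hr0|Hin] Hc]].
        -- subst r0. exists r. simpl; auto.
        -- destruct (H5 x) as [r1 [? ?]]; eauto. exists r1; simpl; auto.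
Qed.

Lemma cov_ncomp (G : mgraph) (S : point G -> Prop) (R0 : list (point G)) :
  Cov S R0 -> exists k, (k <= length R0)%coq_nat /\ has_ncomponents S k.
Proof.
  intros [HA HB].
  destruct (reps_of HA) as [reps [H1 [H2 [H3 [H4 H5]]]]].
  exists (length reps). split; auto.
  exists reps. refine (conj _ (conj _ (conj _ (conj _ _)))); auto.
Qed.

Lemma delta_ex (G : mgraph) (l : list (point G)) (t len : R) : 0 < t < len ->
  exists dl, 0 < dl /\ dl < t /\ t + dl < len /\
    forall e' t', In (PE e' t') l -> t' <> t -> t' < t - dl \/ t + dl < t'.
Proof.
  intros Ht. induction l as [|x l IH].
  - exists (Rmin t (len - t) / 2).
    assert (H1 := Rmin_l t (len - t)). assert (H2 := Rmin_r t (len - t)).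
    assert (0 < Rmin t (len - t)) by (apply Rmin_glb_lt; lra).
    repeat split; try lra. intros e' t' [].
  - destruct IH as [dl [H1 [H2 [H3 H4]]]].
    destruct x as [v | e'' t''].
    + exists dl. repeat split; auto. intros e' t' [Heq|Hin] Hne; [discriminate|]. eauto.
    + destruct (Req_dec t'' t) as [Heq|Hne].
      * exists dl. repeat split; auto. intros e' t' [Heq'|Hin] Hne'.
        -- inversion Heq'; subst. tauto.
        -- eauto.
      * set (m := Rabs (t'' - t) / 2).
        assert (Hm : 0 < m).
        { unfold m. assert (0 < Rabs (t'' - t)) by (apply Rabs_pos_lt; lra). lra. }
        exists (Rmin dl m).
        assert (A1 := Rmin_l dl m). assert (A2 := Rmin_r dl m).
        assert (0 < Rmin dl m) by (apply Rmin_glb_lt; lra).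
        repeat split; try lra.
        intros e' t' [Heq'|Hin] Hne'.
        -- inversion Heq'; subst. unfold m in *.
           destruct (Rle_dec t' t).
           ++ assert (Rabs (t' - t) = - (t' - t)) by (apply Rabs_left; lra). left; lra.
           ++ assert (Rabs (t' - t) = (t' - t)) by (apply Rabs_right; lra). right; lra.
        -- destruct (H4 e' t' Hin Hne'); [left|right]; lra.
Qed.

Lemma step_ee (G : mgraph) (T : point G -> Prop) e1 u u' :
  0 < u < mlen e1 -> 0 < u' < mlen e1 ->
  (forall s, Rmin u u' <= s <= Rmax u u' -> ~ T (PE e1 s)) ->
  step T (PE e1 u) (PE e1 u').
Proof.
  intros Hu Hu' Hs.
  assert (Rmin u u' <= u <= Rmax u u') by (split; [apply Rmin_l|apply Rmax_l]).
  assert (Rmin u u' <= u' <= Rmax u u') by (split; [apply Rmin_r|apply Rmax_r]).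
  split; [split; [exact Hu|apply Hs; auto]|].
  split; [split; [exact Hu'|apply Hs; auto]|].
  exists e1, u. split; auto. left. exists u'. split; auto.
Qed.

Lemma step_es (G : mgraph) (T : point G -> Prop) e1 u :
  0 < u < mlen e1 -> ~ T (PV (msrc e1)) ->
  (forall s, 0 < s <= u -> ~ T (PE e1 s)) ->
  step T (PE e1 u) (PV (msrc e1)).
Proof.
  intros Hu Hv Hs.
  split; [split; [exact Hu|apply Hs; lra]|].
  split; [split; [exact I|exact Hv]|].
  exists e1, u. split; auto.
Qed.

Lemma step_et (G : mgraph) (T : point G -> Prop) e1 u :
  0 < u < mlen e1 -> ~ T (PV (mtgt e1)) ->
  (forall s, u <= s < mlen e1 -> ~ T (PE e1 s)) ->
  step T (PE e1 u) (PV (mtgt e1)).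
Proof.
  intros Hu Hv Hs.
  split; [split; [exact Hu|apply Hs; lra]|].
  split; [split; [exact I|exact Hv]|].
  exists e1, u. split; auto.
Qed.

Lemma step_mono_edge (G : mgraph) (T T' : point G -> Prop) e1 u y :
  step T (PE e1 u) y ->
  (forall s, T' (PE e1 s) -> T (PE e1 s)) -> (forall v, T' (PV v) -> T (PV v)) ->
  step T' (PE e1 u) y.
Proof.
  intros [[Hv1 Hx] [[Hv2 Hy] [e2 [u2 [Heq Hc]]]]] H1 H2.
  inversion Heq; subst.
  split; [split; [exact Hv1|intro; apply Hx; auto]|].
  destruct Hc as [[t' [-> Hs]]|[[-> Hs]|[-> Hs]]].
  - split; [split; [exact Hv2|intro; apply Hy; auto]|].
    exists e2, u2. split; auto. left. exists t'. split; auto.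
    intros s Hs' HT. apply (Hs s Hs'). auto.
  - split; [split; [exact Hv2|intro; apply Hy; auto]|].
    exists e2, u2. split; auto. right; left. split; auto.
    intros s Hs' HT. apply (Hs s Hs'). auto.
  - split; [split; [exact Hv2|intro; apply Hy; auto]|].
    exists e2, u2. split; auto. right; right. split; auto.
    intros s Hs' HT. apply (Hs s Hs'). auto.
Qed.

Section AddPoint.
Variable G : mgraph.
Variable l : list (point G).
Variables (e : mE G) (t dl : R).
Hypothesis Ht : 0 < t < mlen e.
Hypothesis Hnp : ~ In (PE e t) l.
Hypothesis Hdl0 : 0 < dl.
Hypothesis Hdl1 : dl < t.
Hypothesis Hdl2 : t + dl < mlen e.
Hypothesis Hdl3 : forall e' t', In (PE e' t') l -> t' <> t -> t' < t - dl \/ t + dl < t'.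

Definition SS : point G -> Prop := fun x => In x l.
Definition SS' : point G -> Prop := fun x => In x (PE e t :: l).
Definition pp : point G := PE e t.
Definition aa : point G := PE e (t - dl).
Definition bb : point G := PE e (t + dl).
Definition E2 (x y : point G) : Prop := step SS' x y \/ (x = aa /\ y = bb).
Definition R2 := clos_refl_sym_trans _ E2.
Definition phi (z : point G) : point G :=
  if excluded_middle_informative (z = pp) then aa else z.

Lemma phi_p : phi pp = aa.
Proof. unfold phi. destruct excluded_middle_informative; simpl; congruence. Qed.
Lemma phi_ne z : z <> pp -> phi z = z.
Proof. unfold phi. destruct excluded_middle_informative; simpl; congruence. Qed.

Lemma PE_ne u : u <> t -> PE e u <> pp.
Proof. intros H H'. inversion H'. auto. Qed.

Lemma near_free s : t - dl <= s <= t + dl -> ~ In (PE e s) l.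
Proof.
  intros Hs Hin. destruct (Req_dec s t) as [->|Hne]; [tauto|].
  destruct (Hdl3 Hin Hne); lra.
Qed.

Lemma notSS' x : x <> pp -> ~ SS x -> ~ SS' x.
Proof. intros H1 H2 [H3|H3]; auto. Qed.

Lemma R2_step x y : E2 x y -> R2 x y. Proof. apply rst_step. Qed.
Lemma R2_sym x y : R2 x y -> R2 y x. Proof. apply rst_sym. Qed.
Lemma R2_trans x y z : R2 x y -> R2 y z -> R2 x z. Proof. apply rst_trans. Qed.
Lemma R2_refl x : R2 x x. Proof. apply rst_refl. Qed.
Lemma R2_ab : R2 aa bb. Proof. apply R2_step. right; auto. Qed.

Lemma left_lem u : 0 < u <= t -> (forall s, u <= s <= t -> ~ SS (PE e s)) ->
  R2 (phi (PE e u)) aa.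
Proof.
  intros Hu Hf. destruct (Req_dec u t) as [->|Hne].
  - fold pp. rewrite phi_p. apply R2_refl.
  - rewrite phi_ne; [|apply PE_ne; auto]. apply R2_step. left.
    apply step_ee; try lra.
    intros s Hs. apply notSS'.
    + apply PE_ne. assert (Rmax u (t - dl) < t) by (apply Rmax_lub_lt; lra). lra.
    + assert (Rmax u (t - dl) < t) by (apply Rmax_lub_lt; lra).
      destruct (Rle_dec u s).
      * apply Hf; lra.
      * apply near_free. assert (Rmin u (t - dl) <= t - dl) by apply Rmin_r.
        assert (Rmin u (t-dl) = t - dl \/ Rmin u (t - dl) = u).
        { unfold Rmin; destruct (Rle_dec u (t - dl)); auto. }
        lra.
Qed.

Lemma right_lem u : t <= u < mlen e -> (forall s, t <= s <= u -> ~ SS (PE e s)) ->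
  R2 (phi (PE e u)) bb.
Proof.
  intros Hu Hf. destruct (Req_dec u t) as [->|Hne].
  - fold pp. rewrite phi_p. apply R2_ab.
  - rewrite phi_ne; [|apply PE_ne; auto]. apply R2_step. left.
    apply step_ee; try lra.
    intros s Hs. apply notSS'.
    + apply PE_ne. assert (t < Rmin u (t + dl)) by (apply Rmin_glb_lt; lra). lra.
    + assert (t < Rmin u (t + dl)) by (apply Rmin_glb_lt; lra).
      destruct (Rle_dec s u).
      * apply Hf; lra.
      * apply near_free.
        assert (Rmax u (t+dl) = t + dl \/ Rmax u (t + dl) = u).
        { unfold Rmax; destruct (Rle_dec u (t + dl)); auto. }
        lra.
Qed.

Lemma avoid_a : avoids SS' aa.
Proof.
  split; [simpl; lra|]. apply notSS'.
  - unfold aa. apply PE_ne. lra.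
  - apply near_free. lra.
Qed.
Lemma avoid_b : avoids SS' bb.
Proof.
  split; [simpl; lra|]. apply notSS'.
  - unfold bb. apply PE_ne. lra.
  - apply near_free. lra.
Qed.

Lemma PV_ne v : PV v <> pp. Proof. discriminate. Qed.

Lemma step_phi z w : step SS z w -> R2 (phi z) (phi w).
Proof.
  intros Hst. pose proof Hst as Hst0.
  destruct Hst as [Hz [Hw [e1 [u [-> Hc]]]]].
  destruct Hz as [Hzv Hzs]. simpl in Hzv.
  destruct (classic (e1 = e)) as [He|He].
  2:{ assert (Hne : forall s, PE e1 s <> pp) by (intros s H; inversion H; auto).
      rewrite (phi_ne (Hne u)).
      assert (Hw' : phi w = w).
      { destruct Hc as [[t' [-> _]]|[[-> _]|[-> _]]]; apply phi_ne; auto; apply PV_ne. }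
      rewrite Hw'. apply R2_step. left. apply (step_mono_edge Hst0).
      - intros s [H|H]; auto. exfalso; apply (Hne s); auto.
      - intros v [H|H]; auto. discriminate. }
  subst e1.
  destruct Hc as [[u' [-> Hs]]|[[-> Hs]|[-> Hs]]].
  - destruct Hw as [Hwv Hws]. simpl in Hwv.
    assert (Hm1 : Rmin u u' <= u <= Rmax u u') by (split; [apply Rmin_l|apply Rmax_l]).
    assert (Hm2 : Rmin u u' <= u' <= Rmax u u') by (split; [apply Rmin_r|apply Rmax_r]).
    assert (Hmm : (Rmin u u' = u /\ Rmax u u' = u') \/ (Rmin u u' = u' /\ Rmax u u' = u)).
    { unfold Rmin, Rmax. destruct (Rle_dec u u'); auto. }
    destruct (classic (Rmin u u' <= t <= Rmax u u')) as [Hin|Hout].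
    + destruct (Rle_dec u u').
      * apply R2_trans with aa; [apply left_lem; [lra|]|].
        { intros s Hs'. apply Hs. lra. }
        apply R2_trans with bb; [apply R2_ab|]. apply R2_sym. apply right_lem; [lra|].
        intros s Hs'. apply Hs. lra.
      * apply R2_trans with bb; [apply right_lem; [lra|]|].
        { intros s Hs'. apply Hs. lra. }
        apply R2_trans with aa; [apply R2_sym; apply R2_ab|]. apply R2_sym. apply left_lem; [lra|].
        intros s Hs'. apply Hs. lra.
    + rewrite !phi_ne; try (apply PE_ne; intro; subst; lra).
      apply R2_step. left. apply step_ee; auto.
      intros s Hs'. apply notSS'.
      * apply PE_ne. intro; subst; tauto.
      * apply Hs; auto.
  - destruct Hw as [_ Hws].
    rewrite (phi_ne (@PV_ne _)).
    destruct (Rlt_dec u t).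
    + rewrite phi_ne; [|apply PE_ne; lra].
      apply R2_step. left. apply step_es; auto.
      * apply notSS'; auto. apply PV_ne.
      * intros s Hs'. apply notSS'; [apply PE_ne; lra|]. apply Hs; auto.
    + apply R2_trans with bb; [apply right_lem; [lra|]|].
      { intros s Hs'. apply Hs. lra. }
      apply R2_trans with aa; [apply R2_sym; apply R2_ab|].
      apply R2_step. left. apply step_es; [lra| |].
      * apply notSS'; auto. apply PV_ne.
      * intros s Hs'. apply notSS'; [apply PE_ne; lra|]. apply Hs. lra.
  - destruct Hw as [_ Hws].
    rewrite (phi_ne (@PV_ne _)).
    destruct (Rlt_dec t u).
    + rewrite phi_ne; [|apply PE_ne; lra].
      apply R2_step. left. apply step_et; auto.
      * apply notSS'; auto. apply PV_ne.
      * intros s Hs'. apply notSS'; [apply PE_ne; lra|]. apply Hs; auto.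
    + apply R2_trans with aa; [apply left_lem; [lra|]|].
      { intros s Hs'. apply Hs. lra. }
      apply R2_trans with bb; [apply R2_ab|].
      apply R2_step. left. apply step_et; [lra| |].
      * apply notSS'; auto. apply PV_ne.
      * intros s Hs'. apply notSS'; [apply PE_ne; lra|]. apply Hs. lra.
Qed.

Lemma conn_phi z w : conn SS z w -> R2 (phi z) (phi w).
Proof.
  induction 1.
  - apply step_phi; auto.
  - apply R2_refl.
  - apply R2_sym; auto.
  - eapply R2_trans; eauto.
Qed.

Definition II x y := conn SS' x y \/ (conn SS' x aa /\ conn SS' bb y) \/
  (conn SS' x bb /\ conn SS' aa y).

Lemma R2_II x y : R2 x y -> II x y.
Proof.
  unfold II. induction 1.
  - destruct H as [H|[-> ->]].
    + left. apply rst_step; auto.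
    + right; left. split; apply conn_refl'.
  - left. apply conn_refl'.
  - destruct IHclos_refl_sym_trans as [H1|[[H1 H2]|[H1 H2]]].
    + left. apply conn_sym'; auto.
    + right; right. split; apply conn_sym'; auto.
    + right; left. split; apply conn_sym'; auto.
  - destruct IHclos_refl_sym_trans1 as [H1|[[H1 H2]|[H1 H2]]];
    destruct IHclos_refl_sym_trans2 as [H3|[[H3 H4]|[H3 H4]]].
    + left. eapply conn_trans'; eauto.
    + right; left. split; auto. eapply conn_trans'; eauto.
    + right; right. split; auto. eapply conn_trans'; eauto.
    + right; left. split; auto. eapply conn_trans'; eauto.
    + right; left. split; auto.
    + left. eapply conn_trans'; [exact H1|exact H4].
    + right; right. split; auto. eapply conn_trans'; eauto.
    + left. eapply conn_trans'; [exact H1|exact H4].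
    + right; right. split; auto.
Qed.

Lemma add_point (R0 : list (point G)) : Cov SS R0 ->
  exists R1, (length R1 <= S (length R0))%coq_nat /\ Cov SS' R1.
Proof.
  intros [HA HB].
  assert (Hav : forall r, In r R0 -> avoids SS' (phi r)).
  { intros r Hr. destruct (classic (r = pp)) as [->|Hne].
    - rewrite phi_p. apply avoid_a.
    - rewrite phi_ne; auto. destruct (HA r Hr) as [H1 H2]. split; auto. apply notSS'; auto. }
  assert (Hx : forall x, avoids SS' x -> conn SS' x aa \/ conn SS' x bb \/
            exists r, In r R0 /\ conn SS' x (phi r)).
  { intros x [Hxv Hxs].
    assert (Hxp : x <> pp) by (intro; apply Hxs; left; auto).
    destruct (HB x) as [r [Hr Hc]].
    { split; auto. intro; apply Hxs; right; auto. }
    apply conn_phi in Hc. rewrite (phi_ne Hxp) in Hc. apply R2_II in Hc.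
    destruct Hc as [H|[[H _]|[H _]]]; eauto. }
  destruct (HB pp) as [rp [Hrp Hcp]].
  { split; [exact Ht|exact Hnp]. }
  apply conn_phi in Hcp. rewrite phi_p in Hcp. apply R2_II in Hcp.
  assert (Hc : conn SS' aa (phi rp) \/ conn SS' bb (phi rp)).
  { destruct Hcp as [H|[[_ H]|[_ H]]]; auto. }
  destruct Hc as [Hc|Hc].
  - exists (map phi R0 ++ bb :: nil). split.
    + rewrite length_app length_map. simpl. lia.
    + split.
      * intros r Hr. apply in_app_or in Hr. destruct Hr as [Hr|[<-|[]]].
        -- apply in_map_iff in Hr. destruct Hr as [r' [<- Hr']]. auto.
        -- apply avoid_b.
      * intros x Hxa. destruct (Hx x Hxa) as [H|[H|[r [Hr H]]]].
        -- exists (phi rp). split; [apply in_or_app; left; apply in_map; auto|].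
           eapply conn_trans'; eauto.
        -- exists bb. split; auto. apply in_or_app; right; left; auto.
        -- exists (phi r). split; auto. apply in_or_app; left; apply in_map; auto.
  - exists (map phi R0 ++ aa :: nil). split.
    + rewrite length_app length_map. simpl. lia.
    + split.
      * intros r Hr. apply in_app_or in Hr. destruct Hr as [Hr|[<-|[]]].
        -- apply in_map_iff in Hr. destruct Hr as [r' [<- Hr']]. auto.
        -- apply avoid_a.
      * intros x Hxa. destruct (Hx x Hxa) as [H|[H|[r [Hr H]]]].
        -- exists aa. split; auto. apply in_or_app; right; left; auto.
        -- exists (phi rp). split; [apply in_or_app; left; apply in_map; auto|].
           eapply conn_trans'; eauto.
        -- exists (phi r). split; auto. apply in_or_app; left; apply in_map; auto.
Qed.

End AddPoint.

Lemma comps_list (G : mgraph) (base R0 : list (point G)) (l : list (point G)) :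
  NoDup (l ++ base) ->
  (forall x, In x (l ++ base) -> exists e t, x = PE e t /\ 0 < t < mlen e) ->
  Cov (fun x => In x base) R0 ->
  exists R1, (length R1 <= length R0 + length l)%coq_nat /\ Cov (fun x => In x (l ++ base)) R1.
Proof.
  induction l as [|p l IH]; intros Hnd Hpe Hc.
  - exists R0. simpl. split; [lia|exact Hc].
  - simpl in Hnd. inversion Hnd as [|? ? Hnp Hnd']; subst.
    destruct IH as [R1 [HL HC]]; auto.
    { intros x Hx. apply Hpe. simpl; auto. }
    destruct (Hpe p) as [e [t [-> Ht]]]; [simpl; auto|].
    destruct (@delta_ex G (l ++ base) t (mlen e) Ht) as [dl [D0 [D1 [D2 D3]]]].
    destruct (@add_point G (l ++ base) e t dl Ht Hnp D0 D1 D2 D3 R1 HC) as [R2' [HL2 HC2]].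
    exists R2'. split; [simpl; lia|exact HC2].
Qed.

Lemma pred_ext (G : mgraph) (S1 S2 : point G -> Prop) :
  (forall x, S1 x <-> S2 x) -> S1 = S2.
Proof.
  intros H. apply functional_extensionality. intros x. apply propositional_extensionality. auto.
Qed.

Lemma comps_main (G : mgraph) (s : list (point G)) :
  gconnected G -> NoDup s ->
  (forall x, In x s -> exists e t, x = PE e t /\ 0 < t < mlen e) ->
  exists k, (k <= S (length s))%coq_nat /\ has_ncomponents (fun x => In x s) k.
Proof.
  intros Hg Hnd Hpe.
  assert (Hbase : exists R0, (length R0 <= 1)%coq_nat /\ Cov (fun x => In x (@nil (point G))) R0).
  { destruct (classic (exists x0 : point G, valid x0)) as [[x0 Hx0]|Hno].
    - exists (x0 :: nil). split; [simpl; lia|]. split.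
      + intros r [<-|[]]. split; auto.
      + intros x [Hxv _]. exists x0. split; [simpl; auto|]. apply Hg; auto.
    - exists nil. split; [simpl; lia|]. split; [intros r []|].
      intros x [Hxv _]. exfalso. apply Hno. eauto. }
  destruct Hbase as [R0 [HL0 HC0]].
  rewrite <- (app_nil_r s) in Hnd, Hpe.
  destruct (comps_list Hnd Hpe HC0) as [R1 [HL1 HC1]].
  assert (HE : (fun x => In x (s ++ nil)) = (fun x => In x s)).
  { apply pred_ext. intros x. rewrite app_nil_r. tauto. }
  rewrite HE in HC1.
  destruct (cov_ncomp HC1) as [k [Hk Hn]].
  exists k. split; auto. lia.
Qed.

Lemma comps_main2 (G : mgraph) (s : list (point G)) :
  two_connected G -> NoDup s -> s <> nil ->
  (forall x, In x s -> exists e t, x = PE e t /\ 0 < t < mlen e) ->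
  exists k, (k <= length s)%coq_nat /\ has_ncomponents (fun x => In x s) k.
Proof.
  intros [Hg H2] Hnd Hne Hpe.
  destruct s as [|p1 rest]; [tauto|].
  assert (Hp1 : valid p1).
  { destruct (Hpe p1) as [e [t [-> Ht]]]; simpl; auto. }
  assert (Hbase : exists R0, (length R0 <= 1)%coq_nat /\ Cov (fun x => In x (p1 :: nil)) R0).
  { assert (HE : (fun x => In x (p1 :: nil)) = (fun p => p = p1)).
    { apply pred_ext. intros x. simpl. split; [intros [H|[]]; auto|intros H; auto]. }
    rewrite HE.
    destruct (classic (exists x0 : point G, avoids (fun p => p = p1) x0)) as [[x0 Hx0]|Hno].
    - exists (x0 :: nil). split; [simpl; lia|]. split.
      + intros r [<-|[]]. auto.
      + intros x Hx. exists x0. split; [simpl; auto|]. apply H2; auto.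
    - exists nil. split; [simpl; lia|]. split; [intros r []|].
      intros x Hx. exfalso. apply Hno. eauto. }
  destruct Hbase as [R0 [HL0 HC0]].
  assert (Hnd' : NoDup (rest ++ p1 :: nil)).
  { apply (Permutation_NoDup (Permutation_cons_append rest p1)); auto. }
  assert (Hpe' : forall x, In x (rest ++ p1 :: nil) -> exists e t, x = PE e t /\ 0 < t < mlen e).
  { intros x Hx. apply Hpe. apply in_app_or in Hx. simpl. destruct Hx as [Hx|[Hx|[]]]; tauto. }
  destruct (comps_list Hnd' Hpe' HC0) as [R1 [HL1 HC1]].
  assert (HE : (fun x => In x (rest ++ p1 :: nil)) = (fun x => In x (p1 :: rest))).
  { apply pred_ext. intros x. split; intros Hx.
    - apply in_app_or in Hx. simpl. destruct Hx as [Hx|[Hx|[]]]; tauto.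
    - apply in_or_app. simpl in Hx. destruct Hx as [Hx|Hx]; [right; left; auto|left; auto]. }
  rewrite HE in HC1.
  destruct (cov_ncomp HC1) as [k [Hk Hn]].
  exists k. split; auto. simpl. lia.
Qed.

Definition PLspec (g : R -> R) (n : nat) (ts : nat -> R) (ss : nat -> Z) : Prop :=
  (forall i : nat, (i < n)%nat -> (ts i < ts i.+1)) /\
  (forall (i : nat) (t : R), (i < n)%nat -> (ts i <= t <= ts i.+1) ->
        g t = (g (ts i) + IZR (ss i) * (t - ts i))).

Lemma slope_uniq (g : R -> R) (t : R) (s1 s2 : Z) (sg : R) :
  (exists eps, 0 < eps /\ forall h, 0 < h < eps -> g (t + sg * h) = g t + IZR s1 * h) ->
  (exists eps, 0 < eps /\ forall h, 0 < h < eps -> g (t + sg * h) = g t + IZR s2 * h) ->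
  s1 = s2.
Proof.
  intros [e1 [He1 H1]] [e2 [He2 H2]].
  set (h := Rmin e1 e2 / 2).
  assert (Hm1 := Rmin_l e1 e2). assert (Hm2 := Rmin_r e1 e2).
  assert (0 < Rmin e1 e2) by (apply Rmin_glb_lt; lra).
  assert (A1 := H1 h ltac:(unfold h; lra)). assert (A2 := H2 h ltac:(unfold h; lra)).
  assert (IZR s1 * h = IZR s2 * h) by lra.
  apply eq_IZR. apply Rmult_eq_reg_r with h; auto. unfold h; lra.
Qed.

Lemma rslope_eq (g : R -> R) (t : R) (s : Z) :
  (exists eps, 0 < eps /\ forall h, 0 < h < eps -> g (t + h) = g t + IZR s * h) ->
  rslope g t = s.
Proof.
  intros Hs. unfold rslope.
  match goal with |- epsilon ?i ?P = _ => assert (HP : P (epsilon i P)) end.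
  { apply epsilon_spec. exists s. exact Hs. }
  apply (@slope_uniq g t _ _ 1).
  - destruct HP as [eps [H1 H2]]. exists eps. split; auto. intros h Hh.
    replace (t + 1 * h) with (t + h) by ring. auto.
  - destruct Hs as [eps [H1 H2]]. exists eps. split; auto. intros h Hh.
    replace (t + 1 * h) with (t + h) by ring. auto.
Qed.

Lemma lslope_eq (g : R -> R) (t : R) (s : Z) :
  (exists eps, 0 < eps /\ forall h, 0 < h < eps -> g (t - h) = g t + IZR s * h) ->
  lslope g t = s.
Proof.
  intros Hs. unfold lslope.
  match goal with |- epsilon ?i ?P = _ => assert (HP : P (epsilon i P)) end.
  { apply epsilon_spec. exists s. exact Hs. }
  apply (@slope_uniq g t _ _ (-1)).
  - destruct HP as [eps [H1 H2]]. exists eps. split; auto. intros h Hh.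
    replace (t + -1 * h) with (t - h) by ring. auto.
  - destruct Hs as [eps [H1 H2]]. exists eps. split; auto. intros h Hh.
    replace (t + -1 * h) with (t - h) by ring. auto.
Qed.

Lemma pl_rslope g n ts ss i : PLspec g n ts ss -> (i < n)%nat -> rslope g (ts i) = ss i.
Proof.
  intros [Hinc Hlin] Hi. apply rslope_eq.
  assert (Hlt := Hinc i Hi).
  exists (ts i.+1 - ts i). split; [lra|]. intros h Hh.
  rewrite (Hlin i (ts i + h) Hi); [|lra]. ring.
Qed.

Lemma pl_lslope g n ts ss j : PLspec g n ts ss -> (j < n)%nat -> lslope g (ts j.+1) = (- ss j)%Z.
Proof.
  intros [Hinc Hlin] Hj. apply lslope_eq.
  assert (Hlt := Hinc j Hj).
  exists (ts j.+1 - ts j). split; [lra|]. intros h Hh.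
  rewrite (Hlin j (ts j.+1 - h) Hj); [|lra].
  rewrite (Hlin j (ts j.+1) Hj); [|lra]. rewrite opp_IZR. ring.
Qed.

Lemma pl_inner g n ts ss i t : PLspec g n ts ss -> (i < n)%nat -> ts i < t < ts i.+1 ->
  (rslope g t + lslope g t = 0)%Z.
Proof.
  intros [Hinc Hlin] Hi Ht.
  rewrite (@rslope_eq g t (ss i)).
  - rewrite (@lslope_eq g t (- ss i)); [lia|].
    exists (t - ts i). split; [lra|]. intros h Hh.
    rewrite (Hlin i (t - h) Hi); [|lra]. rewrite (Hlin i t Hi); [|lra].
    rewrite opp_IZR. ring.
  - exists (ts i.+1 - t). split; [lra|]. intros h Hh.
    rewrite (Hlin i (t + h) Hi); [|lra]. rewrite (Hlin i t Hi); [|lra]. ring.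
Qed.

Lemma ts_mono g n ts ss : PLspec g n ts ss -> forall k i, (i + k.+1 <= n)%nat -> ts i < ts (i + k.+1)%nat.
Proof.
  intros [Hinc _] k. induction k as [|k IH]; intros i Hik.
  - replace (i + 1)%nat with i.+1 by lia. apply Hinc. lia.
  - assert (A := IH i ltac:(lia)). assert (B := Hinc (i + k.+1)%nat ltac:(lia)).
    replace (i + k.+2)%nat with (i + k.+1).+1 by lia. lra.
Qed.

Lemma ts_lt g n ts ss i j : PLspec g n ts ss -> (i < j)%nat -> (j <= n)%nat -> ts i < ts j.
Proof.
  intros Hp Hij Hj. replace j with (i + (j - i.+1).+1)%nat by lia.
  apply (ts_mono Hp). lia.
Qed.

Lemma pl_cover g n ts ss t : PLspec g n ts ss -> ts 0%nat < t < ts n ->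
  (exists i, (0 < i)%nat /\ (i < n)%nat /\ t = ts i) \/
  (exists i, (i < n)%nat /\ ts i < t < ts i.+1).
Proof.
  intros Hp. induction n as [|m IH]; intros Ht; [lra|].
  assert (Hp' : PLspec g m ts ss).
  { destruct Hp as [H1 H2]. split; intros; [apply H1|apply H2]; auto; lia. }
  destruct (Rtotal_order t (ts m)) as [Hlt|[Heq|Hgt]].
  - destruct m as [|m'].
    + right. exists 0%nat. split; [lia|lra].
    + destruct (IH Hp') as [[i [Hi1 [Hi2 Hi3]]]|[i [Hi1 Hi2]]]; [lra| |].
      * left. exists i. split; [|split]; auto; lia.
      * right. exists i. split; auto; lia.
  - left. exists m. destruct m as [|m']; [lra|]. split; [lia|split; [lia|auto]].
  - right. exists m. split; [lia|]. split; auto. lra.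
Qed.

Definition sumZ {X : Type} (l : list X) (w : X -> Z) : Z :=
  fold_right (fun x acc => (w x + acc)%Z) 0%Z l.

Lemma sumZ_app {X} (l1 l2 : list X) w : sumZ (l1 ++ l2) w = (sumZ l1 w + sumZ l2 w)%Z.
Proof. induction l1; simpl; auto. rewrite IHl1. lia. Qed.

Lemma sumZ_ext {X} (l : list X) w1 w2 : (forall x, In x l -> w1 x = w2 x) -> sumZ l w1 = sumZ l w2.
Proof. induction l; simpl; intros H; auto. rewrite H; auto. rewrite IHl; auto. Qed.

Lemma sumZ_le {X} (l : list X) w1 w2 : (forall x, In x l -> (w1 x <= w2 x)%Z) -> (sumZ l w1 <= sumZ l w2)%Z.
Proof. induction l; simpl; intros H; [lia|]. assert (H1 := H a (or_introl (Logic.eq_refl _))).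
  assert (H2 : (sumZ l w1 <= sumZ l w2)%Z) by (apply IHl; auto). lia. Qed.

Lemma sumZ_add {X} (l : list X) w1 w2 : sumZ l (fun x => (w1 x + w2 x)%Z) = (sumZ l w1 + sumZ l w2)%Z.
Proof. induction l; simpl; auto. rewrite IHl. lia. Qed.

Lemma sumZ_opp {X} (l : list X) w : sumZ l (fun x => (- w x)%Z) = (- sumZ l w)%Z.
Proof. induction l; simpl; auto. rewrite IHl. lia. Qed.

Lemma sumZ_map {X Y} (f : X -> Y) (l : list X) w : sumZ (map f l) w = sumZ l (fun x => w (f x)).
Proof. induction l; simpl; auto. rewrite IHl. auto. Qed.

Lemma sumZ_flat {X Y} (f : X -> list Y) (l : list X) w :
  sumZ (flat_map f l) w = sumZ l (fun x => sumZ (f x) w).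
Proof. induction l; simpl; auto. rewrite sumZ_app IHl. auto. Qed.

Lemma sumZ_weight {X} (a b : list X) (w : X -> Z) : NoDup a ->
  (forall x, In x a -> w x <> 0%Z -> In x b) -> (forall x, In x b -> (0 <= w x)%Z) ->
  (sumZ a w <= sumZ b w)%Z.
Proof.
  revert b. induction a as [|x a IH]; intros b Hnd Hab Hb.
  - simpl. clear Hab. induction b; simpl; [lia|].
    assert (H1 := Hb a (or_introl (Logic.eq_refl _))).
    assert (H2 : (0 <= sumZ b w)%Z) by (apply IHb; intros; apply Hb; simpl; auto). lia.
  - inversion Hnd as [|? ? Hx Hnd']; subst. simpl.
    destruct (Z.eq_dec (w x) 0) as [H0|H0].
    + rewrite H0. simpl. apply IH; auto. intros y Hy. apply Hab; simpl; auto.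
    + destruct (in_split x b) as [b1 [b2 ->]]; [apply Hab; simpl; auto|].
      rewrite sumZ_app. simpl.
      assert (IH' : (sumZ a w <= sumZ (b1 ++ b2) w)%Z).
      { apply IH; auto.
        - intros y Hy Hw. assert (Hyb : In y (b1 ++ x :: b2)) by (apply Hab; simpl; auto).
          apply in_app_or in Hyb. apply in_or_app. destruct Hyb as [Hyb|[Hyb|Hyb]]; auto.
          subst y. tauto.
        - intros y Hy. apply Hb. apply in_app_or in Hy. apply in_or_app.
          destruct Hy; simpl; auto. }
      rewrite sumZ_app in IH'. lia.
Qed.

Lemma sumZ_nonneg_len {X} (a : list X) w : (forall x, In x a -> (1 <= w x)%Z) ->
  (Z.of_nat (length a) <= sumZ a w)%Z.
Proof. induction a; simpl; intros H; [lia|].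
  assert (H1 := H a (or_introl (Logic.eq_refl _))).
  assert (H2 : (Z.of_nat (length a0) <= sumZ a0 w)%Z) by (apply IHa; auto). lia. Qed.

Lemma bigZ_sumZ {I : Type} (s : list I) (F : I -> Z) :
  \big[Z.add/0%Z]_(i <- s) F i = sumZ s F.
Proof. induction s; [by rewrite big_nil|]. rewrite big_cons IHs. reflexivity. Qed.

HB.instance Definition _ := Monoid.isComLaw.Build Z 0%Z Z.add Z.add_assoc Z.add_comm Z.add_0_l.

Lemma big_partition_src (V E : finType) (src : E -> V) (F : E -> Z) :
  \big[Z.add/0%Z]_(v : V) \big[Z.add/0%Z]_(e : E | src e == v) F e =
  \big[Z.add/0%Z]_(e : E) F e.
Proof.
  rewrite (partition_big src (fun _ => true)); [|by []].
  apply eq_bigr => v _. apply eq_bigl => e. by [].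
Qed.

Lemma In_mem (T : eqType) (x : T) (s : list T) : In x s -> x \in s.
Proof.
  induction s as [|y s IH]; simpl; [by []|].
  intros [<-|H]; rewrite seq.in_cons; apply/orP; [left; apply eqxx|right; auto].
Qed.

Lemma mem_In (T : eqType) (x : T) (s : list T) : x \in s -> In x s.
Proof.
  induction s as [|y s IH]; simpl; [by []|].
  rewrite seq.in_cons => /orP [/eqP ->|H]; auto.
Qed.

Lemma uniq_NoDup_PV (G : mgraph) (s : list (mV G)) : seq.uniq s -> NoDup (map (@PV G) s).
Proof.
  induction s as [|x s IH]; simpl; [constructor|].
  move=> /andP [Hx Hu]. constructor; auto.
  intros Hin. apply in_map_iff in Hin. destruct Hin as [y [Hy Hin]].
  inversion Hy; subst. apply In_mem in Hin. by rewrite Hin in Hx.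
Qed.

Lemma tele (ss : nat -> Z) (k j : nat) (w : nat -> Z) :
  (forall i, In i (List.seq (S j) k) -> w i = (ss i - ss (i - 1)%nat)%Z) ->
  sumZ (List.seq (S j) k) w = (ss (j + k)%nat - ss j)%Z.
Proof.
  revert j. induction k as [|k IH]; intros j H.
  - simpl. rewrite addn0. lia.
  - simpl. rewrite (H (S j)); [|simpl; auto].
    rewrite IH; [|intros i Hi; apply H; simpl; auto].
    replace (j + S k)%nat with (S j + k)%nat by lia.
    replace (S j - 1)%nat with j by lia. lia.
Qed.

Lemma D_interior (G : mgraph) (D : point G -> Z) e t :
  vertex_supported D -> valid (PE e t) -> D (PE e t) = 0%Z.
Proof.
  intros Hvs Hv. destruct (Z.eq_dec (D (PE e t)) 0) as [H|H]; auto.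
  destruct (Hvs _ Hv H) as [v Hv']. discriminate.
Qed.

Lemma IL_bound (G : mgraph) (D : point G -> Z) (d : Z) (L : point G -> Z) :
  effective D -> vertex_supported D -> is_degree D d -> in_linsys D L ->
  exists s, NoDup s /\ (forall x, IL L x <-> In x s) /\
    (forall x, In x s -> exists e t, x = PE e t /\ 0 < t < mlen e) /\
    (Z.of_nat (length s) <= d)%Z.
Proof.
  intros Heff Hvs [ld [Hnd [Hlv [Hlc Hd]]]] [f [Hf [HL HLe]]].
  assert (Hd' : d = sumZ ld D) by exact Hd. clear Hd.
  assert (Hf' : forall e : mE G, exists x : nat * (nat -> R) * (nat -> Z),
     snd (fst x) 0%nat = 0 /\ snd (fst x) (fst (fst x)) = mlen e /\
     PLspec (edgefun f e) (fst (fst x)) (snd (fst x)) (snd x)).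
  { intros e. destruct (Hf e) as [n [ts [ss [H0 [Hn [H1 H2]]]]]].
    exists (n, ts, ss). simpl. split; [|split]; auto. split; auto. }
  assert (Hch : exists (nE : mE G -> nat) (tsE : mE G -> nat -> R) (ssE : mE G -> nat -> Z),
    forall e, tsE e 0%nat = 0 /\ tsE e (nE e) = mlen e /\ PLspec (edgefun f e) (nE e) (tsE e) (ssE e)).
  { exists (fun e => fst (fst (proj1_sig (constructive_indefinite_description _ (Hf' e))))).
    exists (fun e => snd (fst (proj1_sig (constructive_indefinite_description _ (Hf' e))))).
    exists (fun e => snd (proj1_sig (constructive_indefinite_description _ (Hf' e)))).
    intros e. exact (proj2_sig (constructive_indefinite_description _ (Hf' e))). }
  clear Hf'. destruct Hch as [nE [tsE [ssE Hch]]].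
  assert (Hn1 : forall e, (0 < nE e)%nat).
  { intros e. destruct (Hch e) as [H0 [Hn _]]. destruct (nE e) eqn:E; [|lia].
    assert (Hp := mlen_pos e). rewrite H0 in Hn. lra. }
  set (Be := fun e => map (fun i => PE e (tsE e i)) (List.seq 1 (nE e - 1))).
  set (B := flat_map Be (index_enum (mE G))).
  assert (HBe_in : forall e x, In x (Be e) -> exists i, (0 < i)%nat /\ (i < nE e)%nat /\ x = PE e (tsE e i)).
  { intros e x Hx. unfold Be in Hx. apply in_map_iff in Hx. destruct Hx as [i [<- Hi]].
    apply in_seq in Hi. exists i. split; [|split]; auto; lia. }
  assert (Hts : forall e i, (0 < i)%nat -> (i < nE e)%nat -> 0 < tsE e i < mlen e).
  { intros e i H1 H2. destruct (Hch e) as [H0 [Hn Hp]].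
    rewrite <- H0. rewrite <- Hn. split; apply (ts_lt Hp); auto. }
  assert (HBvalid : forall x, In x B -> valid x).
  { intros x Hx. unfold B in Hx. apply in_flat_map in Hx. destruct Hx as [e [_ Hx]].
    destruct (HBe_in e x Hx) as [i [H1 [H2 ->]]]. simpl. apply Hts; auto. }
  assert (HLpt : forall e i, (0 < i)%nat -> (i < nE e)%nat ->
     L (PE e (tsE e i)) = (ssE e i - ssE e (i - 1)%nat)%Z).
  { intros e i H1 H2. rewrite HL; [|simpl; apply Hts; auto].
    rewrite (D_interior Hvs); [|simpl; apply Hts; auto].
    change (ord f (PE e (tsE e i))) with
      (rslope (edgefun f e) (tsE e i) + lslope (edgefun f e) (tsE e i))%Z.
    destruct (Hch e) as [_ [_ Hp]].
    rewrite (pl_rslope Hp H2).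
    replace i with ((i - 1).+1)%nat at 2 by lia.
    rewrite (pl_lslope Hp); [lia|lia]. }
  assert (HsumBe : forall e, sumZ (Be e) L = (ssE e (nE e - 1)%nat - ssE e 0%nat)%Z).
  { intros e. unfold Be. rewrite sumZ_map.
    rewrite (@tele (ssE e) (nE e - 1) 0 (fun i => L (PE e (tsE e i)))).
    - rewrite add0n. reflexivity.
    - intros i Hi. apply in_seq in Hi. apply HLpt; lia. }
  assert (HsumB : sumZ B L = sumZ (index_enum (mE G)) (fun e => (ssE e (nE e - 1)%nat - ssE e 0%nat)%Z)).
  { unfold B. rewrite sumZ_flat. apply sumZ_ext. intros e _. apply HsumBe. }
  assert (Hord_e : forall e, (rslope (edgefun f e) 0 + lslope (edgefun f e) (mlen e))%Z =
                     (ssE e 0%nat - ssE e (nE e - 1)%nat)%Z).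
  { intros e. destruct (Hch e) as [H0 [Hn Hp]].
    rewrite <- H0 at 1. rewrite (pl_rslope Hp (Hn1 e)).
    rewrite <- Hn. replace (nE e) with ((nE e - 1).+1)%nat at 1 by (assert (H := Hn1 e); lia).
    rewrite (pl_lslope Hp); [lia|assert (H := Hn1 e); lia]. }
  assert (HsumV : sumZ (index_enum (mV G)) (fun v => ord f (PV v)) =
    sumZ (index_enum (mE G)) (fun e => (rslope (edgefun f e) 0 + lslope (edgefun f e) (mlen e))%Z)).
  { rewrite -!bigZ_sumZ.
    transitivity (\big[Z.add/0%Z]_(v : mV G)
       (\big[Z.add/0%Z]_(e : mE G | msrc e == v) rslope (edgefun f e) 0
      + \big[Z.add/0%Z]_(e : mE G | mtgt e == v) lslope (edgefun f e) (mlen e))%Z).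
    { apply eq_bigr. intros v _. reflexivity. }
    rewrite big_split /=. rewrite !big_partition_src. rewrite -big_split. reflexivity. }
  assert (HDd : (sumZ (index_enum (mV G)) (fun v => D (PV v)) <= d)%Z).
  { rewrite Hd'. rewrite <- (sumZ_map (@PV G)). apply sumZ_weight.
    - apply uniq_NoDup_PV. apply index_enum_uniq.
    - intros x Hx Hne. apply in_map_iff in Hx. destruct Hx as [v [<- _]].
      apply Hlc; auto. exact I.
    - intros x Hx. apply Heff; auto. }
  assert (Hvert : (- sumZ (index_enum (mV G)) (fun v => D (PV v)) <=
                   sumZ (index_enum (mV G)) (fun v => ord f (PV v)))%Z).
  { rewrite <- sumZ_opp. apply sumZ_le. intros v _.
    assert (H := HLe (PV v) I). rewrite HL in H; [lia|exact I]. }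
  assert (HBd : (sumZ B L <= d)%Z).
  { rewrite HsumB. rewrite HsumV in Hvert.
    assert (HE : sumZ (index_enum (mE G)) (fun e => (ssE e (nE e - 1)%nat - ssE e 0%nat)%Z) =
      (- sumZ (index_enum (mE G)) (fun e => (rslope (edgefun f e) 0 + lslope (edgefun f e) (mlen e))%Z))%Z).
    { rewrite <- sumZ_opp. apply sumZ_ext. intros e _. rewrite Hord_e. lia. }
    lia. }
  assert (HILB : forall x, IL L x -> In x B).
  { intros x [Hv [[e [t ->]] Hpos]]. simpl in Hv.
    rewrite HL in Hpos; [|exact Hv]. rewrite (D_interior Hvs) in Hpos; [|exact Hv].
    change (ord f (PE e t)) with
      (rslope (edgefun f e) t + lslope (edgefun f e) t)%Z in Hpos.
    destruct (Hch e) as [H0 [Hn Hp]].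
    destruct (pl_cover Hp (t := t)) as [[i [Hi1 [Hi2 ->]]]|[i [Hi1 Hi2]]].
    - rewrite H0 Hn. exact Hv.
    - unfold B. apply in_flat_map. exists e. split; [apply mem_In; apply mem_index_enum|].
      unfold Be. apply in_map_iff. exists i. split; auto. apply in_seq. lia.
    - rewrite (pl_inner Hp Hi1 Hi2) in Hpos. lia. }
  set (fb := fun x => if excluded_middle_informative (IL L x) then true else false).
  set (dec := fun x y : point G => excluded_middle_informative (x = y)).
  exists (nodup dec (filter fb B)).
  assert (Hmem : forall x, IL L x <-> In x (nodup dec (filter fb B))).
  { intros x. rewrite nodup_In filter_In. unfold fb.
    destruct (excluded_middle_informative (IL L x)); simpl.
    - split; auto.
    - split; [tauto|intros [_ H]; discriminate]. }
  split; [apply NoDup_nodup|]. split; [exact Hmem|]. split.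
  - intros x Hx. apply Hmem in Hx. destruct Hx as [Hv [[e [t ->]] _]]. exists e, t. auto.
  - eapply Z.le_trans; [|exact HBd].
    eapply Z.le_trans; [apply (sumZ_nonneg_len (w := L))|].
    + intros x Hx. apply Hmem in Hx. destruct Hx as [_ [_ H]]. lia.
    + apply sumZ_weight.
      * apply NoDup_nodup.
      * intros x Hx _. apply HILB. apply Hmem. auto.
      * intros x Hx. apply HLe. apply HBvalid; auto.
Qed.

Theorem corollary2p5 (G : mgraph) (D : point G -> Z) (d : Z) :
  gconnected G -> effective D -> vertex_supported D -> is_degree D d ->
  linsys_dim_le D d /\
  (two_connected G -> (0 < d)%Z -> linsys_dim_le D (d - 1)).
Proof.
  intros Hg Heff Hvs Hdeg. split.
  - intros L HL. destruct (IL_bound Heff Hvs Hdeg HL) as [s [Hnd [Hmem [Hpe Hlen]]]].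
    assert (HE : IL L = fun x => In x s) by (apply pred_ext; auto).
    destruct (comps_main Hg Hnd Hpe) as [k [Hk Hn]]. exists k. rewrite HE. split; auto. lia.
  - intros H2 Hdpos L HL. destruct (IL_bound Heff Hvs Hdeg HL) as [s [Hnd [Hmem [Hpe Hlen]]]].
    assert (HE : IL L = fun x => In x s) by (apply pred_ext; auto).
    rewrite HE.
    destruct (classic (s = nil)) as [Hs|Hs].
    + destruct (comps_main Hg Hnd Hpe) as [k [Hk Hn]]. exists k. split; auto.
      subst s. simpl in Hk. lia.
    + destruct (comps_main2 H2 Hnd Hs Hpe) as [k [Hk Hn]]. exists k. split; auto. lia.
Qed.
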